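(* Let $k\ge d$, let $\widetilde{\mathbf X}\in\mathbb R^{k\times d}$ have rows $(\widetilde{\mathbf x}_1,\dots,\widetilde{\mathbf x}_k)\sim\mathrm{VS}_{D_{\mathcal X}}^k$ and let $\mathbf X\in\mathbb R^{k\times d}$ have rows $(\mathbf x_1,\dots,\mathbf x_k)\sim D_{\mathcal X}^k$. Then for every positive definite $\boldsymbol\Sigma\in\mathbb R^{d\times d}$, the conditional distribution of $\widetilde{\mathbf X}$ given $\widetilde{\mathbf X}^\top\widetilde{\mathbf X}=\boldsymbol\Sigma$ is the same as the conditional distribution of $\mathbf X$ given $\mathbf X^\top\mathbf X=\boldsymbol\Sigma$; here conditioning on $\mathbf M=\boldsymbol\Sigma$ is understood as the limit $\epsilon\to0$ of conditioning on $\{\|\mathbf M-\boldsymbol\Sigma\|\le\epsilon\}$ ($\|\cdot\|$ the spectral norm), i.e. for every measurable $A$ for which these conditioning events have positive probability and $\lim_{\epsilon\to0}\Pr(\mathbf X\in A\mid\|\mathbf X^\top\mathbf X-\boldsymbol\Sigma\|\le\epsilon)$ exists, the limit $\lim_{\epsilon\to0}\Pr(\widetilde{\mathbf X}\in A\mid\|\widetilde{\mathbf X}^\top\widetilde{\mathbf X}-\boldsymbol\Sigma\|\le\epsilon)$ exists and equals it.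
   Context: $D_{\mathcal X}$ is a probability distribution on $\mathbb R^d$ with $\mathbb E\|\mathbf x\|^2<\infty$ and invertible $\boldsymbol\Sigma_{D_{\mathcal X}}:=\mathbb E[\mathbf x\mathbf x^\top]$; $D_{\mathcal X}^k$ is the law of $k$ i.i.d. draws. $\mathrm{VS}_{D_{\mathcal X}}^k(A)=\mathbb E_{D_{\mathcal X}^k}[\mathbf 1_A\det(\sum_{i=1}^k\mathbf x_i\mathbf x_i^\top)]/\big(d!\binom kd\det(\boldsymbol\Sigma_{D_{\mathcal X}})\big)$ for measurable $A\subseteq(\mathbb R^d)^k$. *)

(* Defs.v *)
From HB Require Import structures.
From mathcomp Require Import all_boot all_order all_algebra.
From mathcomp Require Import all_classical all_reals all_analysis.
Set Implicit Arguments. Unset Strict Implicit. Unset Printing Implicit Defensive.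
Import Order.TTheory GRing.Theory Num.Theory numFieldNormedType.Exports.
Local Open Scope classical_set_scope.
Local Open Scope ring_scope.

(* Points of R^d are d.-tuples of reals (Borel/product sigma-algebra from the
   library); points of (R^d)^k are k.-tuples of such, i.e. the rows of a
   k x d matrix. *)

Section Defs.
Variable R : realType.

Definition outer {d : nat} (x : d.-tuple R) : 'M[R]_d :=
  \matrix_(a < d, b < d) (tnth x a * tnth x b).

Definition rows_mx {k d : nat} (X : k.-tuple (d.-tuple R)) : 'M[R]_(k, d) :=
  \matrix_(i < k, a < d) tnth (tnth X i) a.

Definition second_moment {d : nat} (D : probability (d.-tuple R) R) : 'M[R]_d :=
  \matrix_(a < d, b < d) fine (\int[D]_x (tnth x a * tnth x b)%:E)%E.

(* Pk is the law D^k of k i.i.d. draws from D: the (unique) probability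
   measure on (R^d)^k whose value on every measurable rectangle
   B_1 x ... x B_k is the product of the D(B_i). *)
Definition is_iid_law {d k : nat} (D : probability (d.-tuple R) R)
    (Pk : probability (k.-tuple (d.-tuple R)) R) : Prop :=
  forall B : 'I_k -> set (d.-tuple R), (forall i, measurable (B i)) ->
    Pk [set X | forall i, B i (tnth X i)] = (\prod_(i < k) D (B i))%E.

Definition VS {d k : nat} (D : probability (d.-tuple R) R)
    (Pk : probability (k.-tuple (d.-tuple R)) R)
    (A : set (k.-tuple (d.-tuple R))) : \bar R :=
  ((\int[Pk]_(X in A) (\det (\sum_(i < k) outer (tnth X i)))%:E) *
   (((d`! * 'C(k, d))%:R * \det (second_moment D))^-1)%:E)%E.

Definition enorm {n : nat} (v : 'cV[R]_n) : R := Num.sqrt (\sum_(i < n) v i 0 ^+ 2).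

Definition specnorm {m n : nat} (M : 'M[R]_(m, n)) : R :=
  sup [set enorm (M *m v) | v in [set v : 'cV[R]_n | enorm v <= 1]].

Definition posdef {n : nat} (S : 'M[R]_n) : Prop :=
  S^T = S /\ forall v : 'cV[R]_n, v != 0 -> 0 < (v^T *m S *m v) 0 0.

Definition gram_ball {k d : nat} (S : 'M[R]_d) (eps : R) :
    set (k.-tuple (d.-tuple R)) :=
  [set X | specnorm ((rows_mx X)^T *m rows_mx X - S) <= eps].

Definition condprob {T : Type} (mu : set T -> \bar R) (A B : set T) : R :=
  fine (mu (A `&` B)) / fine (mu B).

End Defs.

(* Main.v *)
Require Import Defs.
From HB Require Import structures.
From mathcomp Require Import all_boot all_order all_algebra.
From mathcomp Require Import all_classical all_reals all_analysis.
From mathcomp Require Import ring lra.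
From mathcomp Require Import fingroup perm.
Import Order.TTheory GRing.Theory Num.Theory numFieldNormedType.Exports.
Local Open Scope classical_set_scope.
Local Open Scope ring_scope.
Set Implicit Arguments. Unset Strict Implicit. Unset Printing Implicit Defensive.

Lemma det_continuous (R : realType) n : continuous (fun M : 'M[R]_n => \det M).
Proof.
apply: continuous_big => [|s _]; first exact: add_continuous.
move=> x.
have h1 : {for x, continuous (fun=> ((-1) ^+ perm.odd_perm s : R))} by exact: cst_continuous.
have h2 : {for x, continuous (fun M : 'M[R]_n => \prod_i M i (perm.fun_of_perm s i))}.
  apply: (continuous_big (P:=xpredT)) => [|i _]; first exact: mul_continuous.
  exact: coord_continuous.
exact: (continuousM h1 h2).
Qed.

Lemma det_near (R : realType) n (S : 'M[R]_n) (eta : R) : 0 < eta ->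
  exists2 del : R, 0 < del & forall M : 'M[R]_n,
   (forall a b, `|M a b - S a b| <= del) -> `|\det M - \det S| < eta.
Proof.
move=> eta0.
have := @det_continuous R n S; move/cvgrPdist_lt => /(_ _ eta0).
move/nbhs_normP => [e /= e0 H].
exists (e/2); first by rewrite divr_gt0.
move=> M HM; rewrite distrC; apply: (H M) => /=.
rewrite -normrN opprB.
rewrite [X in X < _]mx_normrE.
apply: (@le_lt_trans _ _ (e/2)); last by rewrite ltr_pdivrMr // ltr_pMr // ltr1n.
elim/big_ind: _ => //.
- by rewrite divr_ge0 // ltW.
- by move=> x y hx hy; rewrite ge_max hx hy.
move=> [a b] _ /=; rewrite !mxE; exact: HM.
Qed.

Section Spec.
Variable R : realType.

Definition sqn {n} (v : 'cV[R]_n) : R := \sum_j v j 0 ^+ 2.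
Definition mv {m n} (N : 'M[R]_(m, n)) (v : 'cV[R]_n) : 'cV[R]_m :=
  \col_i (\sum_j N i j * v j 0).

Lemma sqn_ge0 n (v : 'cV[R]_n) : 0 <= sqn v.
Proof. by apply: sumr_ge0 => i _; exact: sqr_ge0. Qed.

Lemma enormE n (v : 'cV[R]_n) : enorm v = Num.sqrt (sqn v).
Proof. by []. Qed.

Lemma mulmxE m n (N : 'M[R]_(m, n)) v : N *m v = mv N v.
Proof. by apply/matrixP => i j; rewrite !mxE ord1. Qed.

Lemma coord_le_sqn n (v : 'cV[R]_n) j : v j 0 ^+ 2 <= sqn v.
Proof.
rewrite /sqn (bigD1 j) //= lerDl; apply: sumr_ge0 => i _; exact: sqr_ge0.
Qed.

Lemma sqnZ n c (v : 'cV[R]_n) : sqn (c *: v) = c ^+ 2 * sqn v.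
Proof. by rewrite /sqn mulr_sumr; apply: eq_bigr => i _; rewrite mxE exprMn. Qed.

Lemma mvZ m n (N : 'M[R]_(m,n)) c v : mv N (c *: v) = c *: mv N v.
Proof.
apply/matrixP => i j; rewrite !mxE mulr_sumr; apply: eq_bigr => k _.
by rewrite mxE mulrCA.
Qed.

Lemma sqn0 n (v : 'cV[R]_n) : sqn v = 0 -> v = 0.
Proof.
move=> h; apply/matrixP => i j; rewrite ord1 mxE.
apply/eqP; rewrite -sqrf_eq0 eq_le sqr_ge0 andbT -h; exact: coord_le_sqn.
Qed.

Lemma spec_ub m n (N : 'M[R]_(m, n)) :
  has_ubound [set enorm (N *m v) | v in [set v : 'cV[R]_n | enorm v <= 1]].
Proof.
exists (Num.sqrt (\sum_i (\sum_j `|N i j|) ^+ 2)).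
move=> _ [v /= hv <-]; rewrite enormE mulmxE ler_wsqrtr //.
apply: ler_sum => i _; rewrite mxE.
have hvj : forall j, `|v j 0| <= 1.
  move=> j; have := coord_le_sqn v j.
  move: hv; rewrite enormE => hv h.
  have : v j 0 ^+ 2 <= 1.
    apply: (le_trans h); rewrite -(@ler_sqrt _ _ 1) ?sqrtr1 //.
  by rewrite -real_normK ?num_real // expr_le1.
rewrite -real_normK ?num_real //.
rewrite lerXn2r ?nnegrE ?normr_ge0 ?sumr_ge0 //.
apply: (le_trans (ler_norm_sum _ _ _)); apply: ler_sum => j _.
by rewrite normrM ler_piMr.
Qed.

Definition qcond {m n} (N : 'M[R]_(m, n)) (e : R) (v : 'cV[R]_n) : Prop :=
  sqn (mv N v) <= e ^+ 2 * sqn v.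

Lemma spec_char m n (N : 'M[R]_(m, n)) e : 0 <= e ->
  (specnorm N <= e <-> forall v, qcond N e v).
Proof.
move=> e0; split.
- move=> hs v; rewrite /qcond.
  have [v0|vn0] := eqVneq (sqn v) 0.
    rewrite v0 mulr0; have -> : v = 0 by exact: sqn0.
    rewrite /sqn big1 // => i _; rewrite mxE big1 ?expr0n // => j _.
    by rewrite mxE mulr0.
  have sp : 0 < sqn v by rewrite lt_def vn0 sqn_ge0.
  set t := Num.sqrt (sqn v).
  have t0 : 0 < t by rewrite sqrtr_gt0.
  have tt : t ^+ 2 = sqn v by rewrite sqr_sqrtr // ltW.
  set w := t^-1 *: v.
  have hw : sqn w = 1 by rewrite /w sqnZ exprVn tt mulVf.
  have : enorm (N *m w) <= e.
    apply: le_trans hs; apply: ub_le_sup; first exact: spec_ub.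
    by exists w => //=; rewrite enormE hw sqrtr1.
  rewrite enormE mulmxE /w mvZ sqnZ exprVn tt.
  move=> h.
  have h2 : (sqn v)^-1 * sqn (mv N v) <= e ^+ 2.
    rewrite -(sqr_sqrtr (a := _ * _)) ?mulr_ge0 ?invr_ge0 ?sqn_ge0 //.
    by rewrite lerXn2r ?nnegrE ?sqrtr_ge0.
  rewrite -[sqn (mv N v)](mulVKf vn0) [leLHS]mulrC.
  by rewrite ler_wpM2r // sqn_ge0.
- move=> hq; apply: ge_sup.
    exists (enorm (N *m 0)), 0 => //=.
    by rewrite enormE /sqn big1 ?sqrtr0 // => i _; rewrite mxE expr0n.
  move=> _ [v /= hv <-]; rewrite enormE mulmxE.
  apply: (le_trans (ler_wsqrtr (hq v))).
  rewrite sqrtrM ?sqr_ge0 // sqrtr_sqr ger0_norm //.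
  by rewrite -enormE ler_piMr.
Qed.

Lemma entry_bound m n (N : 'M[R]_(m, n)) e : 0 <= e ->
  (forall v, qcond N e v) -> forall a b, `|N a b| <= e.
Proof.
move=> e0 hq a b.
pose v : 'cV[R]_n := \col_j (j == b)%:R.
have hv : sqn v = 1.
  rewrite /sqn (bigD1 b) //= big1 ?addr0 => [|j jb]; first by rewrite mxE eqxx expr1n.
  by rewrite mxE (negbTE jb) expr0n.
have hm : (mv N v) a 0 = N a b.
  rewrite mxE (bigD1 b) //= big1 ?addr0 => [|j jb]; first by rewrite mxE eqxx mulr1.
  by rewrite mxE (negbTE jb) mulr0.
have := hq v; rewrite /qcond hv mulr1 => h.
have h2 : `|N a b| ^+ 2 <= e ^+ 2.
  by rewrite real_normK ?num_real // -hm; exact: le_trans (coord_le_sqn _ _) h.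
by move: h2; rewrite ler_sqr ?nnegrE ?normr_ge0.
Qed.

Lemma cont_sqr (T : topologicalType) (g : T -> R) : continuous g ->
  continuous (fun t => g t ^+ 2).
Proof. by move=> cg x; exact: (continuousM (cg x) (cg x)). Qed.

Lemma cont_sqn n : continuous (fun w : 'cV[R]_n => sqn w).
Proof.
apply: continuous_big => [|j _]; first exact: add_continuous.
apply: cont_sqr; exact: coord_continuous.
Qed.

Lemma cont_sqnmv m n (N : 'M[R]_(m, n)) : continuous (fun w : 'cV[R]_n => sqn (mv N w)).
Proof.
apply: continuous_big => [|i _]; first exact: add_continuous.
apply: cont_sqr => /=.
have -> : (fun w : 'cV[R]_n => mv N w i 0) = (fun w => \sum_j N i j * w j 0).
  by apply: funext => w; rewrite mxE.
apply: continuous_big => [|j _]; first exact: add_continuous.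
move=> x; apply: (@continuousM _ _ (fun=> N i j) (fun w : 'cV[R]_n => w j 0)).
  exact: cst_continuous.
exact: coord_continuous.
Qed.

Definition rv n (k : nat) : 'cV[R]_n :=
  match unpickle k with Some z => map_mx (fun q : rat => ratr q) z | None => 0 end.

Lemma qcond_dense m n (N : 'M[R]_(m, n)) e :
  (forall k, qcond N e (rv n k)) -> forall v, qcond N e v.
Proof.
move=> hk v; rewrite /qcond; rewrite -subr_ge0.
set f := fun w : 'cV[R]_n => e ^+ 2 * sqn w - sqn (mv N w).
have cf : continuous f.
  move=> x; apply: (@continuousB _ _ _ (fun w : 'cV[R]_n => e ^+ 2 * sqn w) (fun w => sqn (mv N w))).
    apply: (@continuousM _ _ (fun=> e ^+ 2) (fun w : 'cV[R]_n => sqn w)).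
      exact: cst_continuous.
    exact: cont_sqn.
  exact: cont_sqnmv.
rewrite -/(f v) leNgt; apply/negP => fv0.
have := cf v; move/cvgrPdist_lt => /(_ (- f v)); rewrite oppr_gt0 => /(_ fv0).
move/nbhs_normP => [e1 /= e10 H].
have : forall j : 'I_n, exists q : rat, `|v j 0 - ratr q| < e1 / 2.
  move=> j; have hlt : v j 0 - e1 / 2 < v j 0 + e1 / 2.
    by rewrite ltrBlDr -addrA ltrDl addr_gt0 // divr_gt0.
  have [q] := rat_in_itvoo hlt.
  rewrite in_itv /= => /andP[h1 h2]; exists q.
  by rewrite ltr_distlC h1 h2.
move/fin_all_exists => [q hq].
pose z : 'cV[rat]_n := \col_j q j.
have := hk (pickle z); rewrite /rv pickleK /qcond => hz.
pose w : 'cV[R]_n := map_mx (fun q : rat => ratr q) z.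
have hb : ball_ Num.norm v e1 w.
  rewrite /ball_ /= [X in X < _]mx_normrE.
  apply: (@le_lt_trans _ _ (e1/2)); last by rewrite ltr_pdivrMr // ltr_pMr // ltr1n.
  elim/big_ind: _ => //.
  - by rewrite divr_ge0 // ltW.
  - by move=> x y hx hy; rewrite ge_max hx hy.
  move=> [a b] _ /=; rewrite !mxE ord1; exact: ltW.
have := H w hb => /=.
rewrite ltr_norml => /andP[h _].
have : f w < 0 by lra.
rewrite /f; lra.
Qed.
End Spec.

Section Meas.
Variable R : realType.
Variables d k : nat.
Notation T := (k.-tuple (d.-tuple R)).

Definition Nmx (S : 'M[R]_d) (X : T) : 'M[R]_d := (rows_mx X)^T *m rows_mx X - S.

Lemma gram_entry (X : T) a b :
  ((rows_mx X)^T *m rows_mx X) a b = \sum_i tnth (tnth X i) a * tnth (tnth X i) b.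
Proof. by rewrite !mxE; apply: eq_bigr => i _; rewrite !mxE. Qed.

Lemma sum_outer (X : T) : \sum_i outer (tnth X i) = (rows_mx X)^T *m rows_mx X.
Proof.
apply/matrixP => a b; rewrite gram_entry summxE; apply: eq_bigr => i _.
by rewrite mxE.
Qed.

Lemma mcoord (i : 'I_k) (a : 'I_d) :
  measurable_fun [set: T] (fun X : T => tnth (tnth X i) a).
Proof. apply: (measurableT_comp (measurable_tnth _)); exact: measurable_tnth. Qed.

Lemma meas_gram a b : measurable_fun [set: T]
  (fun X : T => ((rows_mx X)^T *m rows_mx X) a b).
Proof.
rewrite (_ : (fun X : T => _) = (fun X : T => \sum_i tnth (tnth X i) a * tnth (tnth X i) b)).
  by apply: measurable_sum => i; apply: measurable_realfun.measurable_funM; exact: mcoord.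
by apply: funext => X; rewrite gram_entry.
Qed.

Lemma meas_N S a b : measurable_fun [set: T] (fun X => Nmx S X a b).
Proof.
rewrite (_ : (fun X : T => _) = (fun X : T => ((rows_mx X)^T *m rows_mx X) a b) \- cst (S a b)).
  by apply: measurable_realfun.measurable_funB => //; exact: meas_gram.
by apply: funext => X; rewrite /Nmx /= mxE [(- S) a b]mxE.
Qed.

Lemma meas_qcond S eps (v : 'cV[R]_d) :
  measurable [set X : T | qcond (Nmx S X) eps v].
Proof.
pose g := fun X : T => eps ^+ 2 * sqn v - sqn (mv (Nmx S X) v).
have mg : measurable_fun [set: T] g.
  apply: measurable_realfun.measurable_funB => //.
  apply: measurable_sum => i; apply: measurable_realfun.measurable_funX.
  rewrite (_ : (fun X : T => _) = (fun X => \sum_j Nmx S X i j * v j 0)).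
    apply: measurable_sum => j; apply: measurable_realfun.measurable_funM => //; exact: meas_N.
  by apply: funext => X; rewrite mxE.
rewrite (_ : [set X : T | _] = [set: T] `&` g @^-1` `[0, +oo[%classic).
  exact: (mg measurableT _ (measurable_itv `[0, +oo[)).
apply/seteqP; split => X /=.
  by rewrite /qcond in_itv /= andbT /g subr_ge0.
by rewrite /qcond in_itv /= andbT /g subr_ge0 => -[].
Qed.

Lemma gram_ballE (S : 'M[R]_d) (eps : R) : 0 <= eps ->
  gram_ball (k:=k) S eps = \bigcap_n [set X : T | qcond (Nmx S X) eps (rv R d n)].
Proof.
move=> e0; apply/seteqP; split => X /=.
  by rewrite /gram_ball /= (spec_char _ e0) => h n _; exact: h.
move=> h; rewrite /gram_ball /= (spec_char _ e0); apply: qcond_dense => n.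
exact: h.
Qed.

Lemma meas_ball (S : 'M[R]_d) (eps : R) : 0 <= eps -> measurable (gram_ball (k:=k) S eps).
Proof.
move=> e0; rewrite gram_ballE //; apply: bigcapT_measurable => n.
exact: meas_qcond.
Qed.

Lemma meas_det : measurable_fun [set: T] (fun X : T => \det (\sum_(i < k) outer (tnth X i))).
Proof.
rewrite (_ : (fun X : T => _) = (fun X : T =>
   \sum_(s : 'S_d) ((-1) ^+ perm.odd_perm s * \prod_i ((rows_mx X)^T *m rows_mx X) i (s i)))).
  apply: measurable_sum => s; apply: measurable_realfun.measurable_funM => //.
  by apply: measurable_prod => i _; exact: meas_gram.
by apply: funext => X; rewrite sum_outer.
Qed.
End Meas.

Local Open Scope ereal_scope.
Lemma int_bound d0 (T : measurableType d0) (R : realType) (mu : probability T R)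
  (E : set T) (f : T -> R) (s eta : R) :
  measurable E -> measurable_fun E f -> (forall x, E x -> (`|f x - s| <= eta)%R) ->
  (\int[mu]_(x in E) (f x)%:E) \is a fin_num /\
  (`|fine (\int[mu]_(x in E) (f x)%:E) - s * fine (mu E)| <= eta * fine (mu E))%R.
Proof.
move=> mE mf hf.
have muE : mu E < +oo by rewrite (le_lt_trans (probability_le1 mu mE)) ?ltry.
have muEf : mu E \is a fin_num by rewrite ge0_fin_numE.
set p := fine (mu E).
have hp : mu E = p%:E by rewrite fineK.
have bcst : forall r : R, mu.-integrable E (EFin \o cst r).
  by move=> r; apply: measurable_bounded_integrable => //; exact: bounded_cst.
have intf : mu.-integrable E (EFin \o f).
  apply: measurable_bounded_integrable => //.
  have hb : forall x, E x -> (`|f x| <= `|s| + eta)%R.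
    move=> x Ex; have h := hf x Ex; rewrite -[f x](subrK s).
    by apply: (le_trans (ler_normD _ _)); rewrite addrC lerD2l.
  rewrite /bounded_near; near=> M => x Ex /=.
  apply: (le_trans (hb x Ex)); clear Ex x.
  by near: M; apply: nbhs_pinfty_ge; rewrite num_real.
have h1 : \int[mu]_(x in E) ((s - eta)%R)%:E <= \int[mu]_(x in E) (f x)%:E.
  apply: le_integral => //; first exact: (bcst (s - eta)%R).
  move=> x /set_mem Ex; rewrite lee_fin.
  by have := hf x Ex; rewrite ler_norml => /andP[h h']; lra.
have h2 : \int[mu]_(x in E) (f x)%:E <= \int[mu]_(x in E) ((s + eta)%R)%:E.
  apply: le_integral => //; first exact: (bcst (s + eta)%R).
  move=> x /set_mem Ex; rewrite lee_fin.
  by have := hf x Ex; rewrite ler_norml => /andP[h h']; lra.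
rewrite (integral_cst mu mE) in h1.
rewrite (integral_cst mu mE) in h2.
have {}h1 : ((s - eta) * p)%:E <= \int[mu]_(x in E) (f x)%:E.
  by apply: le_trans h1; rewrite EFinM /p fineK.
have {}h2 : \int[mu]_(x in E) (f x)%:E <= ((s + eta) * p)%:E.
  by apply: le_trans h2 _; rewrite EFinM /p fineK.
have fin : \int[mu]_(x in E) (f x)%:E \is a fin_num.
  by rewrite fin_numElt (lt_le_trans _ h1) ?ltNyr // (le_lt_trans h2) ?ltry.
split => //.
move: h1 h2; rewrite -(fineK fin) !lee_fin => h1 h2.
rewrite ler_norml; apply/andP; split; nra.
Unshelve. all: by end_near.
Qed.

Local Close Scope ereal_scope.

Lemma posdef_det (R : realType) n (S : 'M[R]_n) : posdef S -> \det S != 0.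
Proof.
move=> [_ hS]; apply/negP => /det0P [v v0 hv].
have := hS v^T; rewrite trmx_eq0 => /(_ v0).
by rewrite trmxK hv mul0mx mxE ltxx.
Qed.

Theorem lemma3 (R : realType) (d k : nat) (hdk : (d <= k)%N)
  (D : probability (d.-tuple R) R)
  (hmom : D.-integrable setT (fun x => (\sum_(a < d) tnth x a ^+ 2)%:E))
  (hinv : second_moment D \in unitmx)
  (Pk : probability (k.-tuple (d.-tuple R)) R)
  (hPk : is_iid_law D Pk)
  (S : 'M[R]_d) (hS : posdef S)
  (A : set (k.-tuple (d.-tuple R))) (hA : measurable A)
  (hpos : forall eps : R, 0 < eps -> (0 < Pk (gram_ball (k:=k) S eps))%E)
  (hposVS : forall eps : R, 0 < eps -> (0 < VS D Pk (gram_ball (k:=k) S eps))%E)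
  (l : R)
  (hl : condprob Pk A (gram_ball (k:=k) S eps) @[eps --> (0:R)^'+] --> l) :
  condprob (VS D Pk) A (gram_ball (k:=k) S eps) @[eps --> (0:R)^'+] --> l.
Proof.
set s := \det S.
have s0 : s != 0 by exact: posdef_det.
have sa : 0 < `|s| by rewrite normr_gt0.
have key : forall e : R, 0 < e -> \forall eps \near (0:R)^'+,
    `|condprob (VS D Pk) A (gram_ball (k:=k) S eps) - condprob Pk A (gram_ball (k:=k) S eps)| <= e.
  move=> e e0.
  pose eta := Num.min (`|s| / 2) (e * `|s| / 4).
  have eta0 : 0 < eta by rewrite lt_min !divr_gt0 ?mulr_gt0.
  have eta1 : eta <= `|s| / 2 by rewrite ge_min lexx.
  have eta2 : eta <= e * `|s| / 4 by rewrite ge_min lexx orbT.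
  have [del del0 hdel] := det_near S eta0.
  near=> eps.
  have eps0 : 0 < eps by near: eps; exact: nbhs_right_gt.
  have epsd : eps <= del by near: eps; exact: nbhs_right_le.
  set B := gram_ball (k:=k) S eps.
  have mB : measurable B := meas_ball S (ltW eps0).
  have hB : forall X, B X -> `|\det (\sum_(i < k) outer (tnth X i)) - s| <= eta.
    move=> X BX; rewrite sum_outer; apply: ltW; apply: hdel => a b.
    have := entry_bound (ltW eps0) (proj1 (spec_char _ (ltW eps0)) BX) a b.
    rewrite mxE [(- S) a b]mxE => h; exact: le_trans h epsd.
  have mAB : measurable (A `&` B) := measurableI _ _ hA mB.
  have mf := @meas_det R d k.
  have [fa ha] := int_bound Pk mAB (measurable_funS measurableT (@subsetT _ _) mf)
    (fun X ABX => hB X ABX.2).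
  have [fb hb] := int_bound Pk mB (measurable_funS measurableT (@subsetT _ _) mf) hB.
  have hposB := hpos eps eps0.
  have hVS := hposVS eps eps0.
  move: hVS; rewrite /condprob /VS.
  set IAB := (\int[Pk]_(X in A `&` B) _)%E.
  set IB := (\int[Pk]_(X in B) _)%E.
  set c := (((d`! * 'C(k, d))%:R * \det (second_moment D))^-1).
  move: ha hb; rewrite -/IAB -/IB => ha hb hVS.
  have c0 : c != 0.
    by apply/eqP => c0; move: hVS; rewrite c0 mule0 ltxx.
  rewrite !fineM // ?fin_numE //.
  have PBf : Pk B \is a fin_num by rewrite fin_num_measure.
  have PABf : Pk (A `&` B) \is a fin_num by rewrite fin_num_measure.
  have p0 : 0 < fine (Pk B) by rewrite fine_gt0 // hposB /= -ge0_fin_numE // -?lee_fin fineK ?ltry // (le_lt_trans (probability_le1 Pk mB)) ?ltry.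
  have p10 : 0 <= fine (Pk (A `&` B)) by rewrite fine_ge0.
  have p1p : fine (Pk (A `&` B)) <= fine (Pk B).
    rewrite fine_le //; apply: le_measure; [exact: mem_set mAB|exact: mem_set mB|exact: subIsetr].
  move: ha hb p0 p10 p1p.
  set a := fine IAB; set b := fine IB; set p1 := fine (Pk (A `&` B)); set p := fine (Pk B).
  move=> ha hb p0 p10 p1p.
  have hb2 : `|s| * p / 2 <= `|b|.
    move: hb; rewrite ler_norml => /andP[hb1 hb3].
    rewrite ler_normr; apply/orP.
    case: (ltrgtP s 0) => hs; last by move: s0; rewrite hs eqxx.
      right; have e1' := eta1; rewrite (ltr0_norm hs) in e1' *; nra.
    left; have e1' := eta1; rewrite (gtr0_norm hs) in e1' *; nra.
  have b0 : b != 0.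
    apply/eqP => b0; move: hb2; rewrite b0 normr0; apply/negP; rewrite -ltNge.
    by rewrite !mulr_gt0.
  have -> : a * c / (b * c) = a / b by field; rewrite c0 b0.
  have hnum : `|a * p - b * p1| <= 2 * eta * p1 * p.
    have -> : a * p - b * p1 = (a - s * p1) * p - (b - s * p) * p1 by ring.
    apply: (le_trans (ler_normB _ _)); rewrite !normrM (ger0_norm (ltW p0)) (ger0_norm p10).
    have h1 : `|a - s * p1| * p <= eta * p1 * p by rewrite ler_wpM2r // ltW.
    have h2 : `|b - s * p| * p1 <= eta * p * p1 by rewrite ler_wpM2r.
    nra.
  have -> : a / b - p1 / p = (a * p - b * p1) / (b * p) by field; rewrite b0 gt_eqF.
  rewrite normrM normfV normrM (gtr0_norm p0) ler_pdivrMr; last first.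
    by rewrite mulr_gt0 // normr_gt0.
  apply: (le_trans hnum).
  have hbn : 0 <= `|b| := normr_ge0 b.
  have H1 : eta * p1 * p <= eta * p * p.
    by rewrite ler_wpM2r ?(ltW p0) // ler_wpM2l // ltW.
  have H2 : e * (`|s| * p / 2) * p <= e * `|b| * p.
    by rewrite ler_wpM2r ?(ltW p0) // ler_wpM2l // ltW.
  have H3 : eta * (p * p) <= e * `|s| / 4 * (p * p).
    by rewrite ler_wpM2r // mulr_ge0 // ltW.
  nra.
apply/cvgrPdist_le => e e0.
have e20 : 0 < e / 2 by rewrite divr_gt0.
have hl' := (cvgrPdist_le _ _).1 hl (e / 2) e20.
have h2 := key (e / 2) e20.
near=> eps.
have h1 : `|l - condprob Pk A (gram_ball (k:=k) S eps)| <= e / 2 by near: eps; exact: hl'.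
have h3 : `|condprob (VS D Pk) A (gram_ball (k:=k) S eps) - condprob Pk A (gram_ball (k:=k) S eps)| <= e / 2.
  by near: eps; exact: h2.
move: h1 h3; set q := condprob Pk A _; set r := condprob (VS D Pk) A _ => h1 h3.
rewrite -(subrK q l) -addrA -opprB.
apply: (le_trans (ler_normD _ _)); rewrite normrN (distrC q l) (distrC q r) (splitr e); exact: lerD.
Unshelve. all: by end_near.
Qed.
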